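(* For every digraph $X$, $U_{X^{\mathrm{op}}}=U_X$.
   Context: A digraph $X=(V,E)$: $V$ finite, $E\subset\{(u,v)\in V\times V\mid u\ne v\}$; $X^{\mathrm{op}}=(V,\{(v,u)\mid(u,v)\in E\})$. $n=|V|$, $\Sigma_V$ is the set of bijections $\sigma:[n]\to V$, $X\mathrm{Des}(\sigma)=\{i\in[n-1]\mid(\sigma_i,\sigma_{i+1})\in E\}$. $F_I=\sum x_{i_1}\cdots x_{i_n}$ over $1\le i_1\le\cdots\le i_n$ with $i_j<i_{j+1}$ for all $j\in I$. The Redei–Berge symmetric function is $U_X=\sum_{\sigma\in\Sigma_V}F_{X\mathrm{Des}(\sigma)}$. *)

(* Defs.v *)
From mathcomp Require Import all_boot.
Set Implicit Arguments. Unset Strict Implicit. Unset Printing Implicit Defensive.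

(* A digraph on a finite vertex type V is an edge relation E : rel V,
   (u,v) in E iff E u v; loops are excluded by the hypothesis irreflexive E. *)

Definition op_rel (V : Type) (E : rel V) : rel V := fun u v => E v u.

(* Sigma_V : bijections sigma : [n] -> V, n = #|V|, with positions
   represented 0-based by 'I_n (sigma_i of the paper is sigma (i-1)).
   Since #|'I_n| = #|V|, injectivity is the same as bijectivity. *)

(* X-descent set of sigma, as a predicate on 1-based positions i in [n-1]:
   i is a descent iff (sigma_i, sigma_{i+1}) in E. *)
Definition XDes (V : finType) (E : rel V) (n : nat) (sigma : 'I_n -> V) : pred nat :=
  fun i => [exists j : 'I_n, exists k : 'I_n,
              [&& j.+1 == i, k == i :> nat & E (sigma j) (sigma k)]].

(* Formal power series in the variables x_0, x_1, x_2, ... with nat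
   coefficients, given by their coefficient function on monomials.
   A monomial x_{i_1} ... x_{i_d} is encoded by the weakly increasing
   sequence [:: i_1; ...; i_d] of its variable indices; unsorted sequences
   do not encode monomials and get coefficient 0. *)
Definition series := seq nat -> nat.

Definition F (n : nat) (I : pred nat) : series :=
  fun m => nat_of_bool
    [&& size m == n, sorted leq m &
        all (fun j => (j \in I) ==> (nth 0 m j.-1 < nth 0 m j)) (iota 1 n.-1)].

Definition U (V : finType) (E : rel V) : series :=
  fun m => \sum_(sigma : {ffun 'I_#|V| -> V} | injectiveb sigma)
              F #|V| (XDes E sigma) m.

(* Main.v *)
Require Import Defs.
From mathcomp Require Import all_boot.
From mathcomp Require Import zify.
Set Implicit Arguments. Unset Strict Implicit.

Lemma count_prefix (p : pred nat) (m : seq nat) :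
  sorted leq m -> (forall x y, x <= y -> p y -> p x) ->
  forall k, k < size m -> (k < count p m) = p (nth 0 m k).
Proof.
move=> + Hp; elim: m => [|x s IH] //= Hs k Hk.
have Hs' : sorted leq s by move: Hs; case: s {IH Hk} => //= y s /andP[].
have Hall : all (leq x) s by apply: (order_path_min leq_trans).
case Px: (p x) => /=.
  case: k Hk => [|k] Hk //=. rewrite ltnS IH //.
have C0 : count p s = 0.
  apply/eqP; rewrite -leqn0 leqNgt -has_count; apply/hasPn => y Hy.
  by apply/negP => /(Hp _ _ (allP Hall _ Hy)); rewrite Px.
rewrite C0 ltn0; case: k Hk => [|k] Hk /=; first by rewrite Px.
apply/esym/negbTE/negP => Pk.
have : x <= nth 0 s k by apply: (allP Hall); apply: mem_nth.
by move=> /Hp /(_ Pk); rewrite Px.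
Qed.

Section Tau.
Variable m : seq nat.
Hypothesis Hs : sorted leq m.

Definition Lo j := count (fun x => x < nth 0 m j) m.
Definition Hi j := count (fun x => x <= nth 0 m j) m.
Definition tau j := Lo j + Hi j - 1 - j.

Lemma Lo_le j : j < size m -> Lo j <= j.
Proof.
move=> Hj; rewrite leqNgt /Lo count_prefix //= ?ltnn // => x y /leq_ltn_trans; apply.
Qed.

Lemma Hi_gt j : j < size m -> j < Hi j.
Proof.
move=> Hj; rewrite /Hi count_prefix //= => x y /leq_trans; apply.
Qed.

Lemma Hi_le j : Hi j <= size m.
Proof. exact: count_size. Qed.

Lemma tau_lt j : j < size m -> tau j < size m.
Proof.
move=> Hj; have := Lo_le Hj; have := Hi_gt Hj; have := Hi_le j; rewrite /tau; lia.
Qed.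

Lemma nth_tau j : j < size m -> nth 0 m (tau j) = nth 0 m j.
Proof.
move=> Hj; have H1 := Lo_le Hj; have H2 := Hi_gt Hj.
have Ht := tau_lt Hj.
have A : tau j < Hi j by rewrite /tau; lia.
have B : ~~ (tau j < Lo j) by rewrite -leqNgt /tau; lia.
rewrite /Hi count_prefix //= in A; last by move=> x y /leq_trans; apply.
rewrite /Lo count_prefix //= in B; last by move=> x y /leq_ltn_trans; apply.
apply/eqP; rewrite eqn_leq A; by rewrite leqNgt.
Qed.

Lemma tauK j : j < size m -> tau (tau j) = j.
Proof.
move=> Hj; have H1 := Lo_le Hj; have H2 := Hi_gt Hj.
rewrite {1}/tau /Lo /Hi nth_tau // -/(Lo j) -/(Hi j) /tau; lia.
Qed.

Lemma tau_succ j : j.+1 < size m -> nth 0 m j = nth 0 m j.+1 ->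
  tau j = (tau j.+1).+1.
Proof.
move=> Hj E.
have Hj' : j < size m by lia.
have H1 := Lo_le Hj'; have H2 := Hi_gt Hj.
rewrite /tau /Lo /Hi E -/(Lo j.+1) -/(Hi j.+1); lia.
Qed.

End Tau.

Definition Cond (V : Type) (E : rel V) (m : seq nat) n (s : 'I_n -> V) :=
  forall (j k : 'I_n), k = j.+1 :> nat -> E (s j) (s k) -> nth 0 m j < nth 0 m k.

Lemma all_Cond (V : finType) (E : rel V) (m : seq nat) n (s : 'I_n -> V) :
  all (fun j => (j \in XDes E s) ==> (nth 0 m j.-1 < nth 0 m j)) (iota 1 n.-1)
  <-> Cond E m s.
Proof.
split.
  move=> /allP H j k Hk Ejk.
  have : (k : nat) \in iota 1 n.-1 by rewrite mem_iota; have := ltn_ord k; lia.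
  move=> /H /implyP; rewrite Hk /=; apply.
  by apply/existsP; exists j; apply/existsP; exists k; rewrite -Hk !eqxx.
move=> H; apply/allP => i _; apply/implyP => /existsP[j /existsP[k /and3P[/eqP Hj /eqP Hk Ejk]]].
have := H j k (etrans Hk (esym Hj)) Ejk; rewrite Hk -Hj /=; exact.
Qed.

Lemma Cond_ext (V : Type) (E : rel V) m n (s s' : 'I_n -> V) :
  s =1 s' -> Cond E m s -> Cond E m s'.
Proof. by move=> e H j k Hk; rewrite -!e; apply: H. Qed.

Section Main.
Variables (V : finType) (E : rel V).
Variable n : nat.
Variable m : seq nat.
Hypothesis Hsz : size m = n.
Hypothesis Hs : sorted leq m.

Lemma tau_ord_lt (j : 'I_n) : tau m j < n.
Proof. have := @tau_lt m Hs j; rewrite Hsz; apply; exact: ltn_ord. Qed.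

Definition tauo (j : 'I_n) : 'I_n := Ordinal (tau_ord_lt j).

Lemma tauoK : involutive tauo.
Proof. by move=> j; apply: val_inj => /=; rewrite tauK // Hsz. Qed.

Lemma Cond_op (E' : rel V) (s : 'I_n -> V) :
  Cond E' m s -> Cond (op_rel E') m (fun j => s (tauo j)).
Proof.
move=> H j k Hk Ejk.
have Hle : nth 0 m j <= nth 0 m k.
  apply: (sorted_leq_nth leq_trans leqnn) => //=; rewrite ?inE ?Hsz //; lia.
rewrite ltn_neqAle Hle andbT; apply/negP => /eqP Emk.
have Ht : tau m j = (tau m k).+1.
  rewrite Hk tau_succ //; [by rewrite Hsz -Hk | by rewrite -Hk].
have := H (tauo k) (tauo j) Ht Ejk.
by rewrite /= !nth_tau ?Hsz // Emk ltnn.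
Qed.

End Main.
Theorem mainTheorem10 (V : finType) (E : rel V) (hE : irreflexive E) :
  U (op_rel E) =1 U E.
Proof.
move=> m; rewrite /U.
case: (boolP (sorted leq m && (size m == #|V|))) => [/andP[Hs /eqP Hsz] | Hbad]; last first.
  rewrite !big1 // => s _; rewrite /F;
  by move: Hbad; rewrite negb_and => /orP[] /negbTE ->; rewrite ?andbF.
pose t := tauo Hsz Hs.
pose h (s : {ffun 'I_#|V| -> V}) := [ffun i => s (t i)].
have hK : involutive h by move=> s; apply/ffunP => i; rewrite !ffunE /t tauoK.
rewrite (reindex_inj (inv_inj hK)).
have injh : forall s : {ffun 'I_#|V| -> V}, injectiveb s -> injectiveb (h s).
  move=> s /injectiveP Hi; apply/injectiveP => i j; rewrite !ffunE => /Hi.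
  by move/(congr1 t); rewrite /t !tauoK.
apply: eq_big => s.
  by apply/idP/idP => [/injh|/injh//]; rewrite hK.
move=> _; rewrite /F Hsz Hs eqxx /=; congr nat_of_bool; apply/idP/idP.
  move/all_Cond => H; apply/all_Cond.
  have H1 : Cond (op_rel E) m (fun j => s (t j)) by apply: Cond_ext H => j; rewrite ffunE.
  have := @Cond_op _ _ _ Hsz Hs _ _ H1.
  apply: Cond_ext => j /=; by rewrite /t tauoK.
move/all_Cond => H; apply/all_Cond.
apply: Cond_ext (@Cond_op _ _ _ Hsz Hs _ _ H) => j; by rewrite ffunE.
Qed.
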